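(* Let $P\subset\mathbb C$ be a convex polygon having two edges parallel to the real axis, each of length $1$. Let $t_1<t_2<\cdots<t_m$ be real numbers. Then $$\max_{i=1,\dots,m-1}(t_{i+1}-t_i)\leq 1$$ if and only if $\bigcup_{i=1}^m (P+t_i)$ is a convex set.
   Context: $\mathbb C$ is identified with $\mathbb R^2$. For $t\in\mathbb C$, $P+t=\{x+t\mid x\in P\}$. A polygon may degenerate to a segment (regarded as having two overlapping edges). *)

(* Defs.v *)
From HB Require Import structures.
From mathcomp Require Import all_boot all_order all_algebra.
From mathcomp Require Import reals.
Set Implicit Arguments. Unset Strict Implicit. Unset Printing Implicit Defensive.
Import Order.TTheory GRing.Theory Num.Theory.
Local Open Scope ring_scope.

Section Defs.
Variable R : realType.

(* points of the plane C = R^2: (real part, imaginary part) *)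
Definition pt := (R * R)%type.

Definition convex_set (S : pt -> Prop) : Prop :=
  forall (p q : pt) (l : R), S p -> S q -> 0 <= l -> l <= 1 ->
    S ((1 - l) * p.1 + l * q.1, (1 - l) * p.2 + l * q.2).

Definition conv_hull (n : nat) (v : 'I_n -> pt) (z : pt) : Prop :=
  exists w : 'I_n -> R,
    (forall i, 0 <= w i) /\ \sum_(i < n) w i = 1 /\
    z = (\sum_(i < n) w i * (v i).1, \sum_(i < n) w i * (v i).2).

Definition convex_polygon (P : pt -> Prop) : Prop :=
  exists (n : nat) (v : 'I_n -> pt), (0 < n)%N /\ forall z, P z <-> conv_hull v z.

(* P has two edges parallel to the real axis, each of length 1: the bottom
   supporting horizontal line Im z = a and the top one Im z = b both meet P in
   a horizontal segment of length 1.  (a = b is the degenerate case where P is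
   a horizontal segment of length 1, regarded as two overlapping edges.) *)
Definition two_horizontal_unit_edges (P : pt -> Prop) : Prop :=
  exists a b x0 x1 : R,
    (forall z, P z -> a <= z.2 /\ z.2 <= b) /\
    (forall z, (P z /\ z.2 = a) <-> (z.2 = a /\ x0 <= z.1 /\ z.1 <= x0 + 1)) /\
    (forall z, (P z /\ z.2 = b) <-> (z.2 = b /\ x1 <= z.1 /\ z.1 <= x1 + 1)).

Definition translate (P : pt -> Prop) (t : R) (z : pt) : Prop := P (z.1 - t, z.2).

Definition union_translates (P : pt -> Prop) (m : nat) (t : nat -> R) (z : pt) : Prop :=
  exists i : nat, (i < m)%N /\ translate P (t i) z.

End Defs.

(* Main.v *)
Require Import Defs.
From HB Require Import structures.
From mathcomp Require Import all_boot all_order all_algebra.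
From mathcomp Require Import reals.
From mathcomp Require Import ring lra.
Import Order.TTheory GRing.Theory Num.Theory.
Local Open Scope ring_scope.

Section S.
Variable R : realType.

Lemma conv_P (P : pt R -> Prop) : convex_polygon P -> convex_set P.
Proof.
case=> n [v [_ HP]] p q l /HP [wp [wp0 [wp1 ->]]] /HP [wq [wq0 [wq1 ->]]] l0 l1.
apply/HP; exists (fun i => (1 - l) * wp i + l * wq i); split; [|split].
- move=> i; apply: addr_ge0; apply: mulr_ge0 => //; lra.
- by rewrite big_split /= -!mulr_sumr wp1 wq1; ring.
- congr (_, _) => /=; rewrite !mulr_sumr -big_split /=; apply: eq_bigr => i _; ring.
Qed.

Lemma conv_pt (S : pt R -> Prop) p q l z : convex_set S -> S p -> S q -> 0 <= l -> l <= 1 ->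
  z = ((1 - l) * p.1 + l * q.1, (1 - l) * p.2 + l * q.2) -> S z.
Proof. by move=> H Sp Sq l0 l1 ->; apply: H. Qed.

Lemma seg (P : pt R -> Prop) u v y x : convex_set P -> P (u, y) -> P (v, y) ->
  u <= x -> x <= v -> P (x, y).
Proof.
move=> cP Pu Pv ux xv.
have [uv|] := ltrP u v; last first.
  by move=> vu; have -> : x = u by lra.
apply: (@conv_pt P _ _ ((x - u) / (v - u)) _ cP Pu Pv).
- by apply: divr_ge0; lra.
- by rewrite ler_pdivrMr ?mul1r; lra.
- congr (_, _) => /=; field; lra.
Qed.

Lemma slice (P : pt R -> Prop) w1 y : convex_set P -> two_horizontal_unit_edges P ->
  P (w1, y) -> exists lo hi, [/\ lo <= w1, w1 <= hi, 1 <= hi - lo &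
     forall x, lo <= x -> x <= hi -> P (x, y)].
Proof.
move=> cP [a [b [x0 [x1 [Hab [Ha Hb]]]]]] Pw.
have [/= ay yb] := Hab _ Pw.
have PA0 : P (x0, a) by have /(_ (x0, a)) [_ /(_ _)/proj1] := Ha; apply => /=; lra.
have PA1 : P (x0 + 1, a) by have /(_ (x0 + 1, a)) [_ /(_ _)/proj1] := Ha; apply => /=; lra.
have PB0 : P (x1, b) by have /(_ (x1, b)) [_ /(_ _)/proj1] := Hb; apply => /=; lra.
have PB1 : P (x1 + 1, b) by have /(_ (x1 + 1, b)) [_ /(_ _)/proj1] := Hb; apply => /=; lra.
pose mu := if a == b then 0 else (y - a) / (b - a).
have mu0 : 0 <= mu.
  rewrite /mu; case: eqP => // /eqP ab; apply: divr_ge0; lra.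
have mu1 : mu <= 1.
  rewrite /mu; case: eqP => // /eqP ab.
  have ab' : a < b by rewrite lt_neqAle ab /=; lra.
  rewrite ler_pdivrMr ?mul1r; lra.
have ey : (1 - mu) * a + mu * b = y.
  rewrite /mu; case: eqP => [ab|/eqP ab]; first by rewrite ab; lra.
  by field; rewrite subr_eq0 eq_sym.
pose c0 := (1 - mu) * x0 + mu * x1.
have Pc0 : P (c0, y) by rewrite -ey; apply: (@conv_pt P _ _ mu _ cP PA0 PB0).
have Pc1 : P (c0 + 1, y).
  rewrite -ey; apply: (@conv_pt P _ _ (mu) _ cP PA1 PB1) => //=; rewrite /c0; congr (_, _); ring.
exists (Num.min c0 w1), (Num.max (c0 + 1) w1); split.
- by rewrite ge_min lexx orbT.
- by rewrite le_max lexx orbT.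
- have h1 : c0 + 1 <= Num.max (c0 + 1) w1 by rewrite le_max lexx.
  have h2 : Num.min c0 w1 <= c0 by rewrite ge_min lexx.
  lra.
- move=> x hlo hhi.
  have [xc|cx] := ltrP x c0.
    have wx : w1 <= x by move: hlo; rewrite ge_min; case/orP => // h; lra.
    exact: (seg _ _ _ _ _ cP Pw Pc0 wx (ltW xc)).
  have [xc1|c1x] := lerP x (c0 + 1).
    exact: (seg _ _ _ _ _ cP Pc0 Pc1 cx xc1).
  have xw : x <= w1 by move: hhi; rewrite le_max; case/orP => // h; lra.
  exact: (seg _ _ _ _ _ cP Pc1 Pw (ltW c1x) xw).
Qed.

Lemma mono (m : nat) (t : nat -> R) :
  (forall i : nat, (i.+1 < m)%N -> t i < t i.+1) ->
  forall i j, (i <= j)%N -> (j < m)%N -> t i <= t j.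
Proof.
move=> Ht i j ij; elim: j ij => [|j IH] ij jm.
  by have -> : i = 0%N by case: i ij.
have [ij'|] := leqP i j.
  by apply: le_trans (IH ij' (ltnW jm)) _; apply/ltW/Ht.
by move=> ji; have -> : i = j.+1 by apply/eqP; rewrite eqn_leq ij ji.
Qed.

Lemma comb (m : nat) (t : nat -> R) lo hi s i :
  (forall i : nat, (i.+1 < m)%N -> t i.+1 - t i <= 1) ->
  lo <= s -> s <= hi -> 1 <= hi - lo -> t i <= s ->
  forall j, (i <= j)%N -> (j < m)%N -> s <= t j ->
  exists k, (k < m)%N /\ lo <= t k /\ t k <= hi.
Proof.
move=> Hg ls sh lh ts; elim=> [|j IH] ij jm sj.
  move: ts; have -> : i = 0%N by case: i ij.
  by move=> ts; exists 0%N; split => //; split; lra.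
have [ij'|ji] := leqP i j; last first.
  have ei : i = j.+1 by apply/eqP; rewrite eqn_leq ij ji.
  by subst i; exists j.+1; split => //; split; lra.
have [sj'|js] := lerP s (t j).
  exact: IH ij' (ltnW jm) sj'.
have [th|ht] := lerP (t j.+1) hi.
  by exists j.+1; split => //; split => //; lra.
have := Hg j jm => g.
by exists j; split; [exact: ltnW | split; lra].
Qed.
End S.
Arguments conv_pt {R}.
Arguments conv_P {R P}. Arguments slice {R P w1 y}. Arguments mono {R m t}. Arguments comb {R m t lo hi s i}.

Theorem proposition2p9 (R : realType) (P : pt R -> Prop) (m : nat) (t : nat -> R) :
  convex_polygon P -> two_horizontal_unit_edges P ->
  (forall i : nat, (i.+1 < m)%N -> t i < t i.+1) ->
  ((forall i : nat, (i.+1 < m)%N -> t i.+1 - t i <= 1) <->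
   convex_set (union_translates P m t)).
Proof.
move=> hP hE Ht; have cP := conv_P hP; split.
- move=> Hg p q l [i [im Pp]] [j [jm Pq]] l0 l1.
  rewrite /translate /= in Pp Pq.
  pose w1 := (1 - l) * (p.1 - t i) + l * (q.1 - t j).
  pose s := (1 - l) * t i + l * t j.
  have Pw : P (w1, (1 - l) * p.2 + l * q.2) by apply: (conv_pt _ (p.1 - t i, p.2) (q.1 - t j, q.2) l _ cP Pp Pq).

  have es : s = (1 - l) * t i + l * t j by [].
  have ew : w1 = (1 - l) * (p.1 - t i) + l * (q.1 - t j) by [].
  clearbody s w1.
  have [lo [hi [lw wh lh Hs]]] := slice cP hE Pw.
  have ex : exists k, (k < m)%N /\ w1 + s - hi <= t k /\ t k <= w1 + s - lo.
    have [ij|ji] := leqP i j.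
      have tij := mono Ht _ _ ij jm.
      have h1 : 0 <= l * (t j - t i) by apply: mulr_ge0; lra.
      have h2 : 0 <= (1 - l) * (t j - t i) by apply: mulr_ge0; lra.
      apply: (comb (i := i) (s := s) Hg _ _ _ _ _ ij jm); lra.
    have tij := mono Ht _ _ (ltnW ji) im.
    have h1 : 0 <= l * (t i - t j) by apply: mulr_ge0; lra.
    have h2 : 0 <= (1 - l) * (t i - t j) by apply: mulr_ge0; lra.
    apply: (comb (i := j) (s := s) Hg _ _ _ _ _ (ltnW ji) im); lra.
  have [k [km [k1 k2]]] := ex.
  exists k; split => //; rewrite /translate /=.
  have -> : (1 - l) * p.1 + l * q.1 - t k = w1 + s - t k by rewrite ew es; ring.
  apply: Hs; lra.
- move=> cU i im; rewrite leNgt; apply/negP => hd.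
  have [a [b [x0 [x1 [Hab [Ha Hb]]]]]] := hE.
  have PA0 : P (x0, a) by have /(_ (x0, a)) [_ /(_ _)/proj1] := Ha; apply => /=; lra.
  have PA1 : P (x0 + 1, a) by have /(_ (x0 + 1, a)) [_ /(_ _)/proj1] := Ha; apply => /=; lra.
  have U1 : union_translates P m t (x0 + 1 + t i, a).
    by exists i; split; [exact: ltnW | rewrite /translate /= addrK].
  have U2 : union_translates P m t (x0 + t i.+1, a).
    by exists i.+1; split => //; rewrite /translate /= addrK.
  have := cU _ _ (1/2) U1 U2; rewrite /= => /(_ ltac:(lra) ltac:(lra)).
  case=> k [km]; rewrite /translate /= => Pk.
  have /Ha [_ [/= k1 k2]] : P (((1 - 1 / 2) * (x0 + 1 + t i) + 1 / 2 * (x0 + t i.+1) - t k), a) /\ (((1 - 1 / 2) * (x0 + 1 + t i) + 1 / 2 * (x0 + t i.+1) - t k), a).2 = a.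
    by split => //; move: Pk; have -> : (1 - 1 / 2) * a + 1 / 2 * a = a by lra.
  have [ki|ik] := leqP k i.
    have := mono Ht _ _ ki (ltnW im); lra.
  have := mono Ht _ _ ik km; lra.
Qed.
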